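(* Let $(\mathcal S,\mathcal A,P,r)$ be a finite MDP such that $\mathcal P^\pi g^\star=g^\star$ for every policy $\pi$, and let $(g^\star,h^\star)$ be a solution of the modified Bellman equations. Let $V^0\in\mathbb R^n$, $V^k=\frac{2}{k+2}V^0+\frac{k}{k+2}TV^{k-1}$ for $k\ge1$, and let $\pi_k$ be greedy policies, $T^{\pi_k}V^k=TV^k$. Then for every $k\ge1$, \[\|g^\star-g^{\pi_k}\|_\infty\le\|TV^k-V^k-g^\star\|_\infty\le\frac{8}{k+1}\|V^0-h^\star\|_\infty.\]
   Context: An MDP $(\mathcal S,\mathcal A,P,r)$ has finite state space $\mathcal S$ ($|\mathcal S|=n$, functions identified with $\mathbb R^n$), finite action space, transition probabilities $P(s'\mid s,a)$ and bounded reward $r$. For a policy $\pi$: $r^\pi(s)=\sum_a\pi(a\mid s)r(s,a)$, $\mathcal P^\pi(s,s')=\sum_a\pi(a\mid s)P(s'\mid s,a)$, $g^\pi(s)=\liminf_{T\to\infty}\frac1T\mathbb E_\pi[\sum_{t=0}^{T-1}r(s_t,a_t)\mid s_0=s]$, $g^\star=\max_\pi g^\pi$. $T^\pi V=r^\pi+\mathcal P^\pi V$, $(TV)(s)=\max_a\{r(s,a)+\sum_{s'}P(s'\mid s,a)V(s')\}$. A pair $(g,h)$ solves the modified Bellman equations if $\max_a\sum_{s'}P(s'\mid s,a)g(s')=g(s)$ and $\max_a\{r(s,a)+\sum_{s'}P(s'\mid s,a)h(s')\}=h(s)+g(s)$ for all $s$, with some policy attaining both maxima simultaneously; the first component of any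 solution equals $g^\star$. *)

(* Defs.v *)
From HB Require Import structures.
From mathcomp Require Import all_boot all_order all_algebra.
From mathcomp Require Import all_classical all_reals.
From mathcomp Require Import topology normedtype sequences.
Set Implicit Arguments. Unset Strict Implicit. Unset Printing Implicit Defensive.
Import Order.TTheory GRing.Theory Num.Theory.
Local Open Scope ring_scope.

Section MDP.
Variables (R : realType) (S A : finType).
(* transition kernel P(s'|s,a) = P s a s', reward r(s,a) = r s a *)
Variables (P : S -> A -> S -> R) (r : S -> A -> R).

Definition is_kernel := forall s a, (forall s', 0 <= P s a s') /\ \sum_(s' : S) P s a s' = 1.

(* stationary (possibly randomized) policy pi(a|s) = pi s a *)
Definition is_policy (pi : S -> A -> R) :=
  forall s, (forall a, 0 <= pi s a) /\ \sum_(a : A) pi s a = 1.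

(* r^pi and P^pi, acting on functions S -> R (identified with R^n) *)
Definition rpi (pi : S -> A -> R) (s : S) : R := \sum_(a : A) pi s a * r s a.
Definition Ppi (pi : S -> A -> R) (V : S -> R) (s : S) : R :=
  \sum_(a : A) pi s a * \sum_(s' : S) P s a s' * V s'.
Definition Tpi (pi : S -> A -> R) (V : S -> R) (s : S) : R := rpi pi s + Ppi pi V s.

(* max over the (nonempty, witnessed by a0) finite action set *)
Definition maxA (a0 : A) (F : A -> R) : R := \big[Num.max/F a0]_(a : A) F a.

Definition Tbell (a0 : A) (V : S -> R) (s : S) : R :=
  maxA a0 (fun a => r s a + \sum_(s' : S) P s a s' * V s').

(* g^pi(s) = liminf_T (1/T) E_pi[sum_{t<T} r(s_t,a_t) | s_0 = s]; for a stationary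
   policy the expectation is sum_{t<T} ((P^pi)^t r^pi)(s). *)
Definition gpi (pi : S -> A -> R) (s : S) : R :=
  limn_inf (fun T : nat =>
    (T%:R)^-1 * \sum_(t < T) (iter t (Ppi pi) (rpi pi)) s).

Definition modified_bellman (a0 : A) (g h : S -> R) :=
  (forall s, maxA a0 (fun a => \sum_(s' : S) P s a s' * g s') = g s) /\
  (forall s, Tbell a0 h s = h s + g s) /\
  (exists pi, is_policy pi /\
     (forall s, Ppi pi g s = g s) /\ (forall s, Tpi pi h s = h s + g s)).

Fixpoint anchored_vi (a0 : A) (V0 : S -> R) (k : nat) : S -> R :=
  match k with
  | 0 => V0
  | k'.+1 => fun s => (2 / (k%:R + 2)) * V0 s
                      + (k%:R / (k%:R + 2)) * Tbell a0 (anchored_vi a0 V0 k') s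
  end.
End MDP.

Definition supnorm (R : realType) (S : finType) (v : S -> R) : R :=
  \big[Num.max/0]_(s : S) `|v s|.

(* Main.v *)
Require Import Defs.
From mathcomp Require Import all_boot all_order all_algebra.
From mathcomp Require Import all_classical all_reals.
From mathcomp Require Import topology normedtype sequences.
From mathcomp Require Import ring lra.
Import Order.TTheory GRing.Theory Num.Theory.
Set Implicit Arguments. Unset Strict Implicit.
Local Open Scope ring_scope.

Lemma bnd_fun (R : realType) (u : nat -> R) B : (forall n, `|u n| <= B) ->
  bounded_fun (u : R^o^nat).
Proof.
move=> uB; rewrite /bounded_near; near=> M => n _ /=.
apply: (le_trans (uB n)); near: M; apply: nbhs_pinfty_ge; exact: num_real.
Unshelve. all: by end_near. Qed.

Lemma liminf_ge (R : realType) (u : nat -> R) B L N :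
  (forall n, `|u n| <= B) -> (forall n, (N <= n)%N -> L <= u n) ->
  L <= limn_inf (u : R^o^nat).
Proof.
move=> uB uL; rewrite limn_infE; last exact: (@bnd_fun _ _ _ uB).
have hb := @bnd_fun _ _ _ uB.
apply: (@le_trans _ _ (infs (u : R^o^nat) N)).
  rewrite /infs /=; apply: lb_le_inf; first by exists (u N) => /=; exists N => /=.
  move=> _ [m /= Nm <-]; exact: uL.
apply: ub_le_sup; first exact: bounded_fun_has_ubound_infs.
by exists N.
Qed.

Lemma liminf_le (R : realType) (u : nat -> R) B U N :
  (forall n, `|u n| <= B) -> (forall n, (N <= n)%N -> u n <= U) ->
  limn_inf (u : R^o^nat) <= U.
Proof.
move=> uB uU; rewrite limn_infE; last exact: (@bnd_fun _ _ _ uB).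
have hb := @bnd_fun _ _ _ uB.
apply: ge_sup; first by exists (infs (u : R^o^nat) 0); exists 0%N.
move=> _ [n _ <-]; rewrite /infs /=.
apply: (@le_trans _ _ (u (maxn n N))); last by apply: uU; rewrite leq_maxr.
apply: ge_inf; last by exists (maxn n N) => //=; rewrite /= leq_maxl.
apply: has_lbound_sdrop; exact: bounded_fun_has_lbound.
Qed.

Section Aux.
Variable R : realType.

Lemma bigmax_seq (I : eqType) (F : I -> R) (x : R) (s : seq I) :
  [/\ x <= \big[Num.max/x]_(i <- s) F i,
      (forall i, i \in s -> F i <= \big[Num.max/x]_(i <- s) F i) &
      (\big[Num.max/x]_(i <- s) F i = x \/
        exists2 i, i \in s & \big[Num.max/x]_(i <- s) F i = F i)].
Proof.
elim: s => [|a s [IH1 IH2 IH3]]; first by rewrite big_nil; split => //; left.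
rewrite big_cons; split.
- by rewrite le_max IH1 orbT.
- move=> i; rewrite inE => /orP[/eqP->|iin]; first by rewrite le_max lexx.
  by rewrite le_max IH2 ?orbT ?iin.
- rewrite maxEge; case: ifP => _.
    by right; exists a; rewrite ?inE ?eqxx.
  case: IH3 => [->|[i si ->]]; first by left.
  by right; exists i; rewrite // inE si orbT.
Qed.

Lemma maxA_ge (A : finType) (a0 : A) (F : A -> R) a : F a <= Defs.maxA a0 F.
Proof.
have [_ H _] := bigmax_seq F (F a0) (index_enum A).
by rewrite /Defs.maxA; apply: H; rewrite mem_index_enum.
Qed.

Lemma maxA_ex (A : finType) (a0 : A) (F : A -> R) : exists a, Defs.maxA a0 F = F a.
Proof.
have [_ _ [H|[a _ H]]] := bigmax_seq F (F a0) (index_enum A).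
  by exists a0.
by exists a.
Qed.

Definition supnorm_ (S : finType) (v : S -> R) := supnorm v.

Lemma supnorm_ge0 (S : finType) (v : S -> R) : 0 <= supnorm v.
Proof. by have [H _ _] := bigmax_seq (fun s => `|v s|) 0 (index_enum S). Qed.

Lemma le_supnorm (S : finType) (v : S -> R) s : `|v s| <= supnorm v.
Proof.
have [_ H _] := bigmax_seq (fun s => `|v s|) 0 (index_enum S).
by apply: H; rewrite mem_index_enum.
Qed.

Lemma supnorm_le (S : finType) (v : S -> R) c :
  0 <= c -> (forall s, `|v s| <= c) -> supnorm v <= c.
Proof.
move=> c0 H; rewrite /supnorm; have [_ _ [->|[s _ ->]]] := bigmax_seq (fun s => `|v s|) 0 (index_enum S).
  by [].
exact: H.
Qed.


Lemma supnorm_le_mul (S : finType) (v : S -> R) m c :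
  0 < m -> 0 <= c -> (forall s, m * `|v s| <= c) -> m * supnorm v <= c.
Proof.
move=> m0 c0 H; rewrite /supnorm.
have [_ _ [->|[s _ ->]]] := bigmax_seq (fun s => `|v s|) 0 (index_enum S).
  by rewrite mulr0.
exact: H.
Qed.

Lemma normB_le (x c : R) : `|x| <= c -> -c <= x /\ x <= c.
Proof. by move/ler_normlP => [H1 H2]; split => //; rewrite lerNl. Qed.

Lemma norm_le2 (x c : R) : -c <= x -> x <= c -> `|x| <= c.
Proof. by move=> H1 H2; apply/ler_normlP; split => //; rewrite lerNl. Qed.

Lemma norm_le_mul (m x c : R) : 0 <= m -> -c <= m * x -> m * x <= c -> m * `|x| <= c.
Proof. by move=> m0 H1 H2; rewrite -(ger0_norm m0) -normrM; apply: norm_le2. Qed.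

Lemma halpern (S : finType) (e f : nat -> S -> R) :
 (forall k s, (k%:R + 3) * e k.+1 s = 2 * e 0%N s + (k%:R + 1) * f k s) ->
 (forall k, supnorm (f k) <= supnorm (e k)) ->
 (forall k, supnorm (fun s => f k.+1 s - f k s)
            <= supnorm (fun s => e k.+1 s - e k s)) ->
 forall k, supnorm (fun s => f k s - e k s) <= 8 / (k%:R + 1) * supnorm (e 0%N).
Proof.
move=> He Hf Hff.
set R0 := supnorm (e 0%N).
have R00 : 0 <= R0 by apply: supnorm_ge0.
have e0b s : -R0 <= e 0%N s /\ e 0%N s <= R0.
  apply: normB_le. rewrite /R0. exact: (le_supnorm (e 0%N) s).
have HA : forall k, supnorm (e k) <= R0.
  elim=> [|k IH]; first by rewrite lexx.
  apply: supnorm_le => // s.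
  have x0 : 0 <= k%:R :> R by [].
  have [h1 h2] := e0b s.
  have [h3 h4] : -R0 <= f k s /\ f k s <= R0.
    apply: normB_le; apply: le_trans (le_supnorm _ s) _.
    exact: le_trans (Hf k) IH.
  have := He k s; set x := k%:R; set a := e k.+1 s => Ha.
  apply: norm_le2; nra.
have fb k s : -R0 <= f k s /\ f k s <= R0.
  by apply: normB_le; apply: le_trans (le_supnorm _ s) _; apply: le_trans (Hf k) (HA k).
have HB : forall k, (k%:R + 2) * (k%:R + 3) * supnorm (fun s => e k.+1 s - e k s)
                    <= 4 * R0 * (k%:R + 1).
  elim=> [|k IH].
    apply: supnorm_le_mul; [by rewrite /=; lra | by rewrite /=; nra | move=> s].
    have := He 0%N s; have [h1 h2] := e0b s; have [h3 h4] := fb 0%N s.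
    rewrite /= => Ha.
    apply: norm_le_mul; lra.
  have hx : 0 <= k%:R :> R by [].
  have Ek : (k.+1%:R : R) = k%:R + 1 by rewrite natr1.
  have a0 : 0 <= supnorm (fun s => e k.+1 s - e k s) by apply: supnorm_ge0.
  apply: supnorm_le_mul; [by rewrite Ek; nra | by rewrite Ek; nra | move=> s].
  have Hb := He k.+1 s; have Ha := He k s; have [h1 h2] := e0b s.
  have [h3 h4] := fb k.+1 s.
  have [h5 h6] : -supnorm (fun s => e k.+1 s - e k s) <= f k.+1 s - f k s /\
                 f k.+1 s - f k s <= supnorm (fun s => e k.+1 s - e k s).
    by apply: normB_le; apply: le_trans (Hff k); apply: (le_supnorm (fun s => f k.+1 s - f k s)).
  rewrite Ek in Hb *.
  move: IH Ha Hb.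
  set x := k%:R; set a := supnorm _; set b := f k.+1 s - f k s.
  move=> IH Ha Hb.
  have Hid : (x + 1 + 2) * (x + 1 + 3) * (e k.+2 s - e k.+1 s) =
     -2 * e 0%N s + 2 * f k.+1 s + (x+4)*(x+1) * b.
    have -> : (x + 1 + 2) * (x + 1 + 3) * (e k.+2 s - e k.+1 s) =
      (x + 3) * ((x + 1 + 3) * e k.+2 s) - (x + 4) * ((x + 3) * e k.+1 s) by ring.
    by rewrite Ha Hb /b; ring.
  have hb1 : (x+4)*(x+1) * b <= (x+4)*(x+1) * a by apply: ler_wpM2l => //; nra.
  have hb2 : - ((x+4)*(x+1) * a) <= (x+4)*(x+1) * b.
    by rewrite -mulrN; apply: ler_wpM2l => //; nra.
  apply: norm_le_mul; rewrite ?Hid; nra.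
move=> k.
have hx : 0 <= k%:R :> R by [].
set x := k%:R.
have x1 : 0 < x + 1 by lra.
have a0 : 0 <= supnorm (fun s => e k.+1 s - e k s) by apply: supnorm_ge0.
have IH := HB k; rewrite -/x in IH.
apply: supnorm_le; first by apply: mulr_ge0 => //; apply: divr_ge0 => //; lra.
move=> s.
rewrite -(ler_pM2l x1).
have -> : (x + 1) * (8 / (x + 1) * R0) = 8 * R0 by field; lra.
have Ha := He k s; rewrite -/x in Ha.
have [h1 h2] := e0b s; have [h3 h4] := fb k s.
have [h5 h6] : -supnorm (fun s => e k.+1 s - e k s) <= e k.+1 s - e k s /\
               e k.+1 s - e k s <= supnorm (fun s => e k.+1 s - e k s).
  by apply: normB_le; apply: (le_supnorm (fun s => e k.+1 s - e k s)).
move: IH h5 h6; set a := supnorm _; set d := e k.+1 s - e k s => IH h5 h6.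
have Hid : (x+2)*(x+3) * (f k s - e k s) = 2*(x+2)*(f k s - e 0%N s) + (x+2)*(x+3)*d.
  have -> : (x+2)*(x+3) * (f k s - e k s) =
    (x+2)*((x+3)* f k s) - (x+2) * ((x+3) * e k.+1 s) + (x+2)*(x+3)*d by rewrite /d; ring.
  by rewrite Ha; ring.
have hd1 : (x+2)*(x+3)*d <= (x+2)*(x+3)*a by apply: ler_wpM2l => //; nra.
have hd2 : -((x+2)*(x+3)*a) <= (x+2)*(x+3)*d by rewrite -mulrN; apply: ler_wpM2l => //; nra.
have HW : (x+2)*(x+3) * `|f k s - e k s| <= 4 * R0 * (2*x+3).
  apply: norm_le_mul; rewrite ?Hid; nra.
have m0 : 0 < (x+2)*(x+3) by nra.
rewrite -(ler_pM2l m0).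
apply: (@le_trans _ _ ((x+1) * (4 * R0 * (2*x+3)))); last by nra.
rewrite mulrCA; apply: ler_wpM2l => //; lra.
Qed.



Lemma wavg_bound (I : finType) (w y : I -> R) B :
  (forall i, 0 <= w i) -> \sum_i w i = 1 -> (forall i, `|y i| <= B) ->
  `|\sum_i w i * y i| <= B.
Proof.
move=> w0 w1 yB; apply: le_trans (ler_norm_sum _ _ _) _.
apply: (@le_trans _ _ (\sum_i w i * B)).
  apply: ler_sum => i _; rewrite normrM ger0_norm //; exact: ler_wpM2l.
by rewrite -big_distrl /= w1 mul1r.
Qed.

Section MDPlem.
Variables (S A : finType) (P : S -> A -> S -> R) (r : S -> A -> R).
Hypothesis HP : is_kernel P.

Lemma kernel_bound s a (x : S -> R) : `|\sum_s' P s a s' * x s'| <= supnorm x.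
Proof.
have [h1 h2] := HP s a; apply: wavg_bound => // i; exact: le_supnorm.
Qed.

Lemma Ppi_bound pi (x : S -> R) s : is_policy pi -> `|Ppi P pi x s| <= supnorm x.
Proof.
move=> Hpi; have [h1 h2] := Hpi s; apply: wavg_bound => // a.
exact: kernel_bound.
Qed.

Lemma maxA_shift (a0 : A) (F : A -> R) c :
  Defs.maxA a0 (fun a => F a + c) = Defs.maxA a0 F + c.
Proof.
apply/eqP; rewrite eq_le; apply/andP; split.
  have [a ->] := maxA_ex a0 (fun a => F a + c).
  by rewrite lerD2r maxA_ge.
have [a ->] := maxA_ex a0 F.
by apply: le_trans (maxA_ge a0 (fun a => F a + c) a).
Qed.

Lemma maxA_lip (a0 : A) (F G : A -> R) B :
  (forall a, `|F a - G a| <= B) -> `|Defs.maxA a0 F - Defs.maxA a0 G| <= B.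
Proof.
move=> H; apply: norm_le2.
  have [a ->] := maxA_ex a0 G.
  have := maxA_ge a0 F a; have [h1 h2] := normB_le (H a); lra.
have [a ->] := maxA_ex a0 F.
have := maxA_ge a0 G a; have [h1 h2] := normB_le (H a); lra.
Qed.

Lemma Tbell_lip (a0 : A) (V W : S -> R) s :
  `|Tbell P r a0 V s - Tbell P r a0 W s| <= supnorm (fun s => V s - W s).
Proof.
apply: maxA_lip => a.
have -> : r s a + \sum_s' P s a s' * V s' - (r s a + \sum_s' P s a s' * W s')
   = \sum_s' P s a s' * (V s' - W s').
  rewrite opprD addrACA subrr add0r -sumrB; apply: eq_bigr => i _.
  by rewrite mulrBr.
exact: kernel_bound.
Qed.

Lemma Tbell_shift (a0 : A) (V g : S -> R) c s :
  (forall s a, \sum_s' P s a s' * g s' = g s) ->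
  Tbell P r a0 (fun s => V s + c * g s) s = Tbell P r a0 V s + c * g s.
Proof.
move=> Hg; rewrite /Tbell -maxA_shift; congr Defs.maxA; apply: funext => a.
rewrite -addrA; congr (_ + _).
rewrite -(Hg s a) big_distrr -big_split /=; apply: eq_bigr => i _.
by rewrite mulrDr mulrCA.
Qed.

End MDPlem.

Section Part1.
Variables (S A : finType) (P : S -> A -> S -> R) (r : S -> A -> R).
Hypothesis HP : is_kernel P.
Variable pi : S -> A -> R.
Hypothesis Hpi : is_policy pi.
Let Q := Ppi P pi.

Lemma Q_add (x y : S -> R) : Q (fun s => x s + y s) = fun s => Q x s + Q y s.
Proof.
apply: funext => s; rewrite /Q /Ppi -big_split /=; apply: eq_bigr => a _.
by rewrite -mulrDr -big_split /=; congr (_ * _); apply: eq_bigr => i _; rewrite mulrDr.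
Qed.

Lemma Q_opp (x : S -> R) : Q (fun s => - x s) = fun s => - Q x s.
Proof.
apply: funext => s; rewrite /Q /Ppi -sumrN; apply: eq_bigr => a _.
by rewrite -mulrN -sumrN; congr (_ * _); apply: eq_bigr => i _; rewrite mulrN.
Qed.

Lemma It_add t (x y : S -> R) :
  iter t Q (fun s => x s + y s) = fun s => iter t Q x s + iter t Q y s.
Proof. by elim: t => [//|t IH]; rewrite !iterS IH Q_add. Qed.

Lemma It_opp t (x : S -> R) : iter t Q (fun s => - x s) = fun s => - iter t Q x s.
Proof. by elim: t => [//|t IH]; rewrite !iterS IH Q_opp. Qed.

Lemma It_fix t (g : S -> R) : Q g = g -> iter t Q g = g.
Proof. by move=> Hg; elim: t => [//|t IH]; rewrite iterS IH. Qed.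

Lemma It_bound t (x : S -> R) s : `|iter t Q x s| <= supnorm x.
Proof.
elim: t s => [|t IH] s; first exact: le_supnorm.
rewrite iterS; apply: le_trans (Ppi_bound HP _ _ Hpi) _.
apply: supnorm_le => //; exact: supnorm_ge0.
Qed.


Lemma part1 (a0 : A) (g V : S -> R) :
  (forall s, Ppi P pi g s = g s) ->
  (forall s, Tpi P r pi V s = Tbell P r a0 V s) ->
  supnorm (fun s => g s - gpi P r pi s)
    <= supnorm (fun s => Tbell P r a0 V s - V s - g s).
Proof.
move=> Hg HT.
set W := Tbell P r a0 V. set d := fun s => W s - V s - g s.
have Qg : Q g = g by apply: funext.
have Hr : rpi r pi = fun s => V s + g s + d s + - Q V s.
  apply: funext => s; have := HT s; rewrite /Tpi /d /W /Q => H; lra.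
have Hit t s : iter t Q (rpi r pi) s
    = iter t Q V s + g s + iter t Q d s - iter t.+1 Q V s.
  by rewrite Hr It_add It_opp It_add It_add (It_fix t Qg) iterSr.
have Hsum T s : \sum_(t < T) iter t Q (rpi r pi) s
    = V s - iter T Q V s + T%:R * g s + \sum_(t < T) iter t Q d s.
  elim: T => [|T IH]; first by rewrite !big_ord0 /= mul0r subrr !addr0.
  by rewrite !big_ord_recr /= IH Hit -natr1 iterS; ring.
set D := supnorm d; set M := supnorm V.
have D0 : 0 <= D by apply: supnorm_ge0.
have M0 : 0 <= M by apply: supnorm_ge0.
have Hdsum T s : `|\sum_(t < T) iter t Q d s| <= T%:R * D.
  apply: le_trans (ler_norm_sum _ _ _) _.
  apply: (@le_trans _ _ (\sum_(t < T) D)); first by apply: ler_sum => t _; apply: It_bound.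
  by rewrite sumr_const card_ord mulr_natl.
apply: supnorm_le => // s.
set u := fun T : nat => (T%:R)^-1 * \sum_(t < T) iter t Q (rpi r pi) s.
have -> : gpi P r pi s = limn_inf (u : R^o^nat) by [].
have Hu T : T%:R * (u T - g s) = V s - iter T Q V s + \sum_(t < T) iter t Q d s.
  rewrite mulrBr /u; case: T => [|T].
    by rewrite !big_ord0 /= !mul0r !subrr addr0.
  rewrite mulrA divff ?mul1r ?pnatr_eq0 // Hsum; ring.
have HVb T : `|V s - iter T Q V s| <= 2 * M.
  apply: le_trans (ler_normB _ _) _.
  have := le_supnorm V s; have := It_bound T V s; rewrite -/M; lra.
have HB T : (0 < T)%N -> -(2 * M) - T%:R * D <= T%:R * (u T - g s) /\
                          T%:R * (u T - g s) <= 2 * M + T%:R * D.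
  move=> _; rewrite Hu.
  have [h1 h2] := normB_le (HVb T); have [h3 h4] := normB_le (Hdsum T s); lra.
have Hbd T : `|u T| <= `|g s| + 2 * M + D.
  case: T => [|T]; first by rewrite /u invr0 mul0r normr0; have := normr_ge0 (g s); lra.
  have [h1 h2] := HB T.+1 isT.
  have T1 : 1 <= T.+1%:R :> R by rewrite ler1n.
  have [g1 g2] := normB_le (lexx `|g s|).
  apply: norm_le2; move: h1 h2 T1; set t := T.+1%:R; set y := u T.+1 => h1 h2 T1.
    nra.
  nra.
have Hev e : 0 < e -> exists N, forall T, (N <= T)%N ->
    -(D + e) <= u T - g s /\ u T - g s <= D + e.
  move=> e0; have q0 : 0 <= 2 * M / e by apply: divr_ge0 => //; lra.
  exists (Num.Def.archi_bound (2 * M / e)).+1 => T NT.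
  have Tp : (0 < T)%N by apply: leq_trans NT.
  have hT : 2 * M / e < T%:R.
    apply: (lt_le_trans (archi_boundP q0)); rewrite ler_nat; exact: ltnW.
  rewrite ltr_pdivrMr // in hT.
  have [h1 h2] := HB T Tp.
  have T0 : 0 < T%:R :> R by rewrite ltr0n.
  move: h1 h2 hT T0; set t := T%:R; set y := u T - g s => h1 h2 hT T0.
  split; nra.
have Lo : g s - D <= limn_inf (u : R^o^nat).
  apply/ler_addgt0Pr => e e0; have [N HN] := Hev e e0.
  have : g s - D - e <= limn_inf (u : R^o^nat).
    apply: (liminf_ge (B := `|g s| + 2 * M + D) (N := N)) => // T NT.
    have [h1 h2] := HN T NT; lra.
  lra.
have Up : limn_inf (u : R^o^nat) <= g s + D.
  apply/ler_addgt0Pr => e e0; have [N HN] := Hev e e0.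
  have : limn_inf (u : R^o^nat) <= g s + D + e.
    apply: (liminf_le (B := `|g s| + 2 * M + D) (N := N)) => // T NT.
    have [h1 h2] := HN T NT; lra.
  lra.
apply: norm_le2; lra.
Qed.

End Part1.
End Aux.

Lemma sum_ind (R : realType) (A : finType) (a : A) (X : A -> R) :
  \sum_(a' : A) (if a' == a then 1 else 0) * X a' = X a.
Proof.
rewrite (bigD1 a) //= eqxx mul1r big1 ?addr0 // => a' /negbTE ->; exact: mul0r.
Qed.

Theorem corollary2 (R : realType) (S A : finType) (a0 : A)
    (P : S -> A -> S -> R) (r : S -> A -> R)
    (gstar hstar : S -> R) (V0 : S -> R) (pik : nat -> S -> A -> R) :
  is_kernel P ->
  modified_bellman P r a0 gstar hstar ->
  (forall pi, is_policy pi -> forall s, Ppi P pi gstar s = gstar s) ->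
  (forall k, (1 <= k)%N -> is_policy (pik k) /\
     forall s, Tpi P r (pik k) (anchored_vi P r a0 V0 k) s
               = Tbell P r a0 (anchored_vi P r a0 V0 k) s) ->
  forall k, (1 <= k)%N ->
    supnorm (fun s => gstar s - gpi P r (pik k) s)
      <= supnorm (fun s => Tbell P r a0 (anchored_vi P r a0 V0 k) s
                           - anchored_vi P r a0 V0 k s - gstar s) /\
    supnorm (fun s => Tbell P r a0 (anchored_vi P r a0 V0 k) s
                      - anchored_vi P r a0 V0 k s - gstar s)
      <= 8 / (k%:R + 1) * supnorm (fun s => V0 s - hstar s).
Proof.
move=> HP HB Hpol Hgreedy k k1.
have [_ [Hh _]] := HB.
have Pg : forall s a, \sum_s' P s a s' * gstar s' = gstar s.
  move=> s a.
  pose pol := fun (_ : S) (a' : A) => (if a' == a then 1 else 0) : R.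
  have Hpl : is_policy pol.
    move=> s'; split; first by move=> a'; rewrite /pol; case: eqP.
    rewrite (bigD1 a) //= /pol eqxx big1 ?addr0 // => a' /negbTE -> //.
  have := Hpol pol Hpl s; rewrite /Ppi /pol sum_ind //.
split.
  have [Hpk HT] := Hgreedy k k1.
  exact: (part1 HP Hpk (Hpol _ Hpk) HT).
set V := anchored_vi P r a0 V0.
pose e := fun (j : nat) (s : S) => V j s - hstar s - j%:R / 3 * gstar s.
pose f := fun (j : nat) (s : S) =>
  Tbell P r a0 (V j) s - hstar s - (j%:R + 3) / 3 * gstar s.
have Hs c (W : S -> R) s : Tbell P r a0 (fun s => W s + c * gstar s) s
    = Tbell P r a0 W s + c * gstar s by apply: Tbell_shift.
have He j s : (j%:R + 3) * e j.+1 s = 2 * e 0%N s + (j%:R + 1) * f j s.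
  rewrite /e /f /V /=.
  have Ej : (j.+1%:R : R) = j%:R + 1 by rewrite natr1.
  rewrite Ej; set x := j%:R; set T := Tbell _ _ _ _ s.
  have x0 : 0 <= x by [].
  field; lra.
have Hf j : supnorm (f j) <= supnorm (e j).
  apply: supnorm_le; first exact: supnorm_ge0.
  move=> s.
  have -> : f j s = Tbell P r a0 (V j) s
                  - Tbell P r a0 (fun s => hstar s + j%:R / 3 * gstar s) s.
    by rewrite Hs Hh /f; lra.
  apply: le_trans (@Tbell_lip _ _ _ P r HP a0 _ _ s) _.
  have -> : (fun s => V j s - (hstar s + j%:R / 3 * gstar s)) = e j.
    by apply: funext => s'; rewrite /e; lra.
  exact: lexx.
have Hff j : supnorm (fun s => f j.+1 s - f j s)
            <= supnorm (fun s => e j.+1 s - e j s).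
  apply: supnorm_le; first exact: supnorm_ge0.
  move=> s.
  have Ej : (j.+1%:R : R) = j%:R + 1 by rewrite natr1.
  have -> : f j.+1 s - f j s = Tbell P r a0 (V j.+1) s
                  - Tbell P r a0 (fun s => V j s + 1 / 3 * gstar s) s.
    by rewrite Hs /f Ej; lra.
  apply: le_trans (@Tbell_lip _ _ _ P r HP a0 _ _ s) _.
  have -> : (fun s => V j.+1 s - (V j s + 1 / 3 * gstar s))
            = (fun s => e j.+1 s - e j s).
    by apply: funext => s'; rewrite /e Ej; lra.
  exact: lexx.
have H := halpern He Hf Hff k.
have E1 : (fun s => Tbell P r a0 (V k) s - V k s - gstar s)
          = (fun s => f k s - e k s).
  by apply: funext => s; rewrite /e /f; lra.
have E0 : e 0%N = (fun s => V0 s - hstar s).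
  by apply: funext => s; rewrite /e /V /= !mul0r subr0.
by rewrite E1 -E0.
Qed.
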